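(* Let $A\in\mathbb{R}^{m\times n}$, $b\in\mathbb{R}^m$, let $L\in\mathbb{R}^{s\times n}$ have full column rank, and let $W_1,\dots,W_M\in\mathbb{R}^{m\times\ell}$ satisfy $\sum_{i=1}^M W_iW_i^\top=I_m$. Let $\tau(1),\tau(2),\dots$ be random variables with values in $\{1,\dots,M\}$ such that for each $j\in\mathbb{N}_0$, $(\tau(jM+1),\dots,\tau((j+1)M))$ is a (random) permutation of $\{1,\dots,M\}$ (random cyclic sampling). Write $A_{\tau(k)}=W_{\tau(k)}^\top A$, $b_{\tau(k)}=W_{\tau(k)}^\top b$. (i) Let $\lambda>0$, $y_0=0$, and define $$y_k = y_{k-1} - B_kA_{\tau(k)}^\top(A_{\tau(k)}y_{k-1}-b_{\tau(k)}),\qquad B_k=\Big(\lambda L^\top L+\sum_{i=1}^kA_{\tau(i)}^\top A_{\tau(i)}\Big)^{-1}.$$ Then for every $j\in\mathbb{N}$, $y_{jM}=x(\lambda/j)$. (ii) Let $\Lambda_1,\Lambda_2,\dots$ be real numbers with $\lambda_k=\sum_{i=1}^k\Lambda_i>0$ for all $k$, let $x_0\in\mathbb{R}^n$ be arbitrary, and define $$x_k = x_{k-1}-B_k\big(A_{\tau(k)}^\top(A_{\tau(k)}x_{k-1}-b_{\tau(k)})+\Lambda_kL^\top Lx_{k-1}\big),\qquad B_k=\Big(\sum_{i=1}^k\Lambda_iL^\top L+\sum_{i=1}^kA_{\tau(i)}^\top A_{\tau(i)}\Big)^{-1}.$$ Then for every $j\in\mathbb{N}$, $x_{jM}=x(\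lambda_{jM}/j)$.
   Context: For $\mu>0$, $x(\mu)=(A^\top A+\mu L^\top L)^{-1}A^\top b$ denotes the Tikhonov-regularized solution of $\min_x\|Ax-b\|_2^2+\mu\|Lx\|_2^2$. *)

(* Defs.v *)
From HB Require Import structures.
From mathcomp Require Import all_boot all_order all_algebra.
Set Implicit Arguments. Unset Strict Implicit. Unset Printing Implicit Defensive.
Import Order.TTheory GRing.Theory Num.Theory.
Local Open Scope ring_scope.

Definition tikh (R : realFieldType) (m n s : nat)
  (A : 'M[R]_(m, n)) (L : 'M[R]_(s, n)) (b : 'cV[R]_m) (mu : R) : 'cV[R]_n :=
  invmx (A^T *m A + mu *: (L^T *m L)) *m (A^T *m b).

Definition Ablk (R : realFieldType) (m n l M : nat) (A : 'M[R]_(m, n))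
  (W : 'I_M -> 'M[R]_(m, l)) (tau : nat -> 'I_M) (k : nat) : 'M[R]_(l, n) :=
  (W (tau k))^T *m A.
Definition bblk (R : realFieldType) (m l M : nat) (b : 'cV[R]_m)
  (W : 'I_M -> 'M[R]_(m, l)) (tau : nat -> 'I_M) (k : nat) : 'cV[R]_l :=
  (W (tau k))^T *m b.

(* Random cyclic sampling (pathwise): for every j, (tau(jM+1),...,tau((j+1)M))
   is a permutation of {1,...,M} (here of 'I_M). *)
Definition cyclic_sampling (M : nat) (tau : nat -> 'I_M) : Prop :=
  forall j : nat, perm_eq [seq tau (j * M + k)%N | k <- iota 1 M] (enum 'I_M).

Definition AtA_sum (R : realFieldType) (m n l M : nat) (A : 'M[R]_(m, n))
  (W : 'I_M -> 'M[R]_(m, l)) (tau : nat -> 'I_M) (k : nat) : 'M[R]_n :=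
  \sum_(1 <= i < k.+1) (Ablk A W tau i)^T *m Ablk A W tau i.

Fixpoint yseq (R : realFieldType) (m n s l M : nat) (A : 'M[R]_(m, n))
  (b : 'cV[R]_m) (L : 'M[R]_(s, n)) (W : 'I_M -> 'M[R]_(m, l))
  (tau : nat -> 'I_M) (lam : R) (k : nat) : 'cV[R]_n :=
  match k with
  | 0 => 0
  | k'.+1 =>
      let y := yseq A b L W tau lam k' in
      let Bk := invmx (lam *: (L^T *m L) + AtA_sum A W tau k) in
      y - Bk *m ((Ablk A W tau k)^T *m (Ablk A W tau k *m y - bblk b W tau k))
  end.

Definition lamseq (R : realFieldType) (Lam : nat -> R) (k : nat) : R :=
  \sum_(1 <= i < k.+1) Lam i.

Fixpoint xseq (R : realFieldType) (m n s l M : nat) (A : 'M[R]_(m, n))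
  (b : 'cV[R]_m) (L : 'M[R]_(s, n)) (W : 'I_M -> 'M[R]_(m, l))
  (tau : nat -> 'I_M) (Lam : nat -> R) (x0 : 'cV[R]_n) (k : nat) : 'cV[R]_n :=
  match k with
  | 0 => x0
  | k'.+1 =>
      let x := xseq A b L W tau Lam x0 k' in
      let Bk := invmx ((\sum_(1 <= i < k.+1) Lam i *: (L^T *m L))
                       + AtA_sum A W tau k) in
      x - Bk *m ((Ablk A W tau k)^T *m (Ablk A W tau k *m x - bblk b W tau k)
                 + Lam k *: ((L^T *m L) *m x))
  end.

(* Main.v *)
Require Import Defs.
From HB Require Import structures.
From mathcomp Require Import all_boot all_order all_algebra.
From mathcomp Require Import zify.
Set Implicit Arguments. Unset Strict Implicit. Unset Printing Implicit Defensive.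
Import Order.TTheory GRing.Theory Num.Theory.
Local Open Scope ring_scope.

Definition psd (R : realFieldType) n (Q : 'M[R]_n) :=
  forall u : 'rV[R]_n, 0 <= (u *m Q *m u^T) 0 0.

Lemma qf_sq (R : realFieldType) q (w : 'rV[R]_q) :
  (w *m w^T) 0 0 = \sum_i w 0 i ^+ 2.
Proof. by rewrite mxE; apply: eq_bigr => i _; rewrite mxE expr2. Qed.

Lemma qf_CtC (R : realFieldType) p n (C : 'M[R]_(p, n)) (u : 'rV[R]_n) :
  u *m (C^T *m C) *m u^T = (u *m C^T) *m (u *m C^T)^T.
Proof. by rewrite trmx_mul trmxK !mulmxA. Qed.

Lemma psd_CtC (R : realFieldType) p n (C : 'M[R]_(p, n)) : psd (C^T *m C).
Proof.
move=> u; rewrite qf_CtC qf_sq; apply: sumr_ge0 => i _; exact: sqr_ge0.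
Qed.

Lemma psd_add (R : realFieldType) n (P Q : 'M[R]_n) : psd P -> psd Q -> psd (P + Q).
Proof. by move=> hP hQ u; rewrite mulmxDr mulmxDl mxE addr_ge0. Qed.

Lemma psd0 (R : realFieldType) n : psd (0 : 'M[R]_n).
Proof. by move=> u; rewrite mulmx0 mul0mx mxE. Qed.

Lemma psd_sum (R : realFieldType) n (I : Type) (r : seq I) (P : pred I)
  (F : I -> 'M[R]_n) : (forall i, psd (F i)) -> psd (\sum_(i <- r | P i) F i).
Proof.
move=> hF; apply: (big_ind (@psd R n)) => //; [exact: psd0 | exact: psd_add].
Qed.

Lemma unit_lemma (R : realFieldType) s n (L : 'M[R]_(s, n)) (mu : R)
  (S : 'M[R]_n) : \rank L = n -> 0 < mu -> psd S ->
  (mu *: (L^T *m L) + S) \in unitmx.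
Proof.
move=> rL mu0 hS.
rewrite -row_free_unit -kermx_eq0; apply/rowV0P => u /sub_kermxP Hu.
have q0 : (u *m (mu *: (L^T *m L) + S) *m u^T) 0 0 = 0
  by rewrite Hu mul0mx mxE.
move: q0; rewrite mulmxDr mulmxDl mxE -scalemxAr -scalemxAl mxE.
have ha := psd_CtC L u; have hb := hS u.
move/eqP; rewrite paddr_eq0; last (by []); last exact: mulr_ge0 (ltW mu0) ha.
rewrite mulf_eq0 (gt_eqF mu0) /=.
case/andP=> /eqP ha0 _.
move: ha0; rewrite qf_CtC qf_sq => /psumr_eq0P h.
have w0 : u *m L^T = 0.
  apply/matrixP => i j; rewrite ord1 [RHS]mxE.
  by apply/eqP; rewrite -sqrf_eq0; apply/eqP; apply: h => // k _; exact: sqr_ge0.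
apply/eqP; rewrite -(mulmx_free_eq0 _ (B := L^T)) ?w0 //.
by rewrite /row_free mxrank_tr rL.
Qed.

Lemma blocksum (V : zmodType) M (tau : nat -> 'I_M) (F : 'I_M -> V) j :
  cyclic_sampling tau ->
  \sum_(1 <= i < (j * M).+1) F (tau i) = (\sum_i F i) *+ j.
Proof.
move=> cs; elim: j => [|j IH]; first by rewrite mul0n big_geq.
rewrite mulSnr (big_cat_nat _ (n := (j * M).+1)) //=; last by lia.
rewrite IH mulrSr; congr (_ + _).
rewrite -add1n big_addn.
have -> : ((j * M + M).+1 - j * M = M.+1)%N by lia.
rewrite /index_iota subSS subn0.
have -> : \sum_(i < M) F i = \sum_(i <- enum 'I_M) F i by rewrite big_enum.
rewrite -(perm_big _ (cs j)) big_map.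
by apply: eq_bigr => i _; rewrite addnC.
Qed.

Lemma AtA_cycle (R : realFieldType) (m n l M : nat) (A : 'M[R]_(m, n))
  (W : 'I_M -> 'M[R]_(m, l)) (tau : nat -> 'I_M) j :
  \sum_(i < M) W i *m (W i)^T = 1%:M -> cyclic_sampling tau ->
  AtA_sum A W tau (j * M) = (A^T *m A) *+ j.
Proof.
move=> hW cs; rewrite /AtA_sum /Ablk.
rewrite (blocksum (fun k => ((W k)^T *m A)^T *m ((W k)^T *m A))) //.
congr (_ *+ _).
transitivity (A^T *m (\sum_(i < M) W i *m (W i)^T) *m A); last by rewrite hW mulmx1.
rewrite mulmx_sumr mulmx_suml; apply: eq_bigr => i _.
by rewrite trmx_mul trmxK !mulmxA.
Qed.

Lemma Atb_cycle (R : realFieldType) (m n l M : nat) (A : 'M[R]_(m, n))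
  (b : 'cV[R]_m) (W : 'I_M -> 'M[R]_(m, l)) (tau : nat -> 'I_M) j :
  \sum_(i < M) W i *m (W i)^T = 1%:M -> cyclic_sampling tau ->
  \sum_(1 <= i < (j * M).+1) (Ablk A W tau i)^T *m bblk b W tau i = (A^T *m b) *+ j.
Proof.
move=> hW cs; rewrite /bblk /Ablk.
rewrite (blocksum (fun k => ((W k)^T *m A)^T *m ((W k)^T *m b))) //.
congr (_ *+ _).
transitivity (A^T *m (\sum_(i < M) W i *m (W i)^T) *m b); last by rewrite hW mulmx1.
rewrite mulmx_sumr mulmx_suml; apply: eq_bigr => i _.
by rewrite trmx_mul trmxK !mulmxA.
Qed.

Lemma psd_AtA (R : realFieldType) (m n l M : nat) (A : 'M[R]_(m, n))
  (W : 'I_M -> 'M[R]_(m, l)) (tau : nat -> 'I_M) k : psd (AtA_sum A W tau k).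
Proof. apply: psd_sum => i; exact: psd_CtC. Qed.

Lemma inv_y (R : realFieldType) (m n s l M : nat) (A : 'M[R]_(m, n))
  (b : 'cV[R]_m) (L : 'M[R]_(s, n)) (W : 'I_M -> 'M[R]_(m, l))
  (tau : nat -> 'I_M) (lam : R) :
  0 < lam -> \rank L = n -> forall k,
  (lam *: (L^T *m L) + AtA_sum A W tau k) *m yseq A b L W tau lam k =
  \sum_(1 <= i < k.+1) (Ablk A W tau i)^T *m bblk b W tau i.
Proof.
move=> lam0 rL; elim=> [|k IH]; first by rewrite /= mulmx0 big_geq.
rewrite [yseq _ _ _ _ _ _ _]/= mulmxBr mulmxA mulmxV; last first.
  exact: unit_lemma (psd_AtA _ _ _ _).
rewrite mul1mx {1}/AtA_sum big_nat_recr //= addrA -/(AtA_sum A W tau k).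
rewrite mulmxDl IH [in RHS]big_nat_recr //= mulmxBr mulmxA.
rewrite opprB addrA /Ablk !mulmxA -!addrA; congr (_ + _).
by rewrite addrC subrK.
Qed.

Lemma zmod_id (V : zmodType) (a P Q c : V) : a + P + Q + (c - Q - P) = a + c.
Proof. by rewrite !addrA (addrAC _ c) addrK (addrAC _ c) addrK. Qed.

Lemma inv_x (R : realFieldType) (m n s l M : nat) (A : 'M[R]_(m, n))
  (b : 'cV[R]_m) (L : 'M[R]_(s, n)) (W : 'I_M -> 'M[R]_(m, l))
  (tau : nat -> 'I_M) (Lam : nat -> R) (x0 : 'cV[R]_n) :
  (forall k : nat, (1 <= k)%N -> 0 < lamseq Lam k) -> \rank L = n -> forall k,
  ((\sum_(1 <= i < k.+1) Lam i *: (L^T *m L)) + AtA_sum A W tau k)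
     *m xseq A b L W tau Lam x0 k =
  \sum_(1 <= i < k.+1) (Ablk A W tau i)^T *m bblk b W tau i.
Proof.
move=> hL rL; elim=> [|k IH].
  by rewrite /= /AtA_sum !big_geq // addr0 mul0mx.
rewrite [xseq _ _ _ _ _ _ _ _]/= mulmxBr mulmxA mulmxV; last first.
  rewrite -scaler_suml; apply: unit_lemma (psd_AtA _ _ _ _) => //.
  exact: hL.
rewrite mul1mx.
rewrite [X in X *m _](_ : _ = (\sum_(1 <= i < k.+1) Lam i *: (L^T *m L)
   + AtA_sum A W tau k) + Lam k.+1 *: (L^T *m L)
   + (Ablk A W tau k.+1)^T *m Ablk A W tau k.+1); last first.
  rewrite /AtA_sum (big_nat_recr k.+1) //= (big_nat_recr k.+1) //=.
  by rewrite !addrA (addrAC _ (Lam k.+1 *: _)).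
rewrite (mulmxDl (_ + _ + _)) (mulmxDl (_ + AtA_sum A W tau k)) IH [in RHS](big_nat_recr k.+1) //= mulmxBr -scalemxAl.
rewrite opprD opprB /Ablk !mulmxA.
exact: zmod_id.
Qed.

Lemma finish (R : realFieldType) (m n s : nat) (A : 'M[R]_(m, n))
  (b : 'cV[R]_m) (L : 'M[R]_(s, n)) (c : R) (j : nat) (y : 'cV[R]_n) :
  0 < c -> (1 <= j)%N -> \rank L = n ->
  (c *: (L^T *m L) + (A^T *m A) *+ j) *m y = (A^T *m b) *+ j ->
  y = tikh A L b (c / j%:R).
Proof.
move=> c0 j1 rL hy.
have j0 : (j%:R : R) != 0 by rewrite pnatr_eq0 -lt0n.
have cj0 : 0 < c / j%:R by rewrite divr_gt0 // ltr0n.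
set Q := A^T *m A + (c / j%:R) *: (L^T *m L).
have Qu : Q \in unitmx by rewrite /Q addrC; exact: unit_lemma (psd_CtC A).
have QE : Q = j%:R^-1 *: (c *: (L^T *m L) + (A^T *m A) *+ j).
  rewrite scalerDr scalerA -scaler_nat scalerA mulVf // scale1r addrC.
  by rewrite /Q mulrC.
have Qy : Q *m y = A^T *m b.
  by rewrite QE -scalemxAl hy -scaler_nat scalerA mulVf // scale1r.
by rewrite /tikh -/Q -Qy mulKmx.
Qed.

Theorem theorem2p3 (R : realFieldType) (m n s l M : nat)
  (A : 'M[R]_(m, n)) (b : 'cV[R]_m) (L : 'M[R]_(s, n))
  (W : 'I_M -> 'M[R]_(m, l)) (tau : nat -> 'I_M) :
  \rank L = n ->
  \sum_(i < M) W i *m (W i)^T = 1%:M ->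
  cyclic_sampling tau ->
  (forall lam : R, 0 < lam ->
     forall j : nat, (1 <= j)%N ->
       yseq A b L W tau lam (j * M) = tikh A L b (lam / j%:R)) /\
  (forall (Lam : nat -> R) (x0 : 'cV[R]_n),
     (forall k : nat, (1 <= k)%N -> 0 < lamseq Lam k) ->
     forall j : nat, (1 <= j)%N ->
       xseq A b L W tau Lam x0 (j * M) = tikh A L b (lamseq Lam (j * M) / j%:R)).
Proof.
move=> rL hW cs; have M0 : (0 < M)%N by have := ltn_ord (tau 0%N); lia.
split.
  move=> lam lam0 j j1; apply: finish => //.
  by rewrite -(@AtA_cycle _ _ _ _ _ A W tau j hW cs) -(@Atb_cycle _ _ _ _ _ A b W tau j hW cs) inv_y.
move=> Lam x0 hL j j1; apply: finish => //.
  by apply: hL; rewrite muln_gt0 j1.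
rewrite -(@AtA_cycle _ _ _ _ _ A W tau j hW cs) -(@Atb_cycle _ _ _ _ _ A b W tau j hW cs) -(@inv_x _ _ _ _ _ _ A b L W tau Lam x0 hL rL (j * M)).
by rewrite /lamseq scaler_suml.
Qed.
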